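(* Let $\mathcal{B}$ be a $\sigma$-algebra on a nonempty set $E$, and let $\nu$ be a maxitive measure on $\mathcal{B}$ having a $\mathcal{B}$-measurable cardinal density $c:E\to[0,\infty]$, i.e. $\nu(B)=\sup_{x\in B}c(x)$ for all $B\in\mathcal{B}$. Then for every maxitive measure $\tau$ on $\mathcal{B}$, $\nu\ll\tau$ if and only if $\nu\lll\tau$. In particular $\nu$ is autocontinuous, i.e. $\nu\lll\nu$.
   Context: A maxitive measure on $\mathcal{B}$ is a map $\nu:\mathcal{B}\to[0,\infty]$ with $\nu(\emptyset)=0$ and $\nu(B\cup B')=\max(\nu(B),\nu(B'))$ for all $B,B'\in\mathcal{B}$. A map $f:E\to[0,\infty]$ is $\mathcal{B}$-measurable if $\{f>t\}\in\mathcal{B}$ for all $t\geq 0$. For a maxitive measure $\tau$, a subset $N\subset E$ is $\tau$-negligible if $N\subset G$ for some $G\in\mathcal{B}$ with $\tau(G)=0$. The $\tau$-essential supremum of $f$ on $B$ is $\bigoplus^{\tau}_{x\in B}f(x)=\inf\{t>0: B\cap\{f>t\}\text{ is }\tau\text{-negligible}\}$ (with $\inf\emptyset=\infty$). We write $\nu\ll\tau$ if $\tau(B)=0$ implies $\nu(B)=0$ for all $B\in\mathcal{B}$, and $\nu\lll\tau$ if there exists a $\mathcal{B}$-measurable $f:E\to[0,\infty]$ (a relative density) with $\nu(B)=\bigoplus^{\tau}_{x\in B}f(x)$ for all $B\in\mathcal{B}$. *)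

(* Defs.v *)
From mathcomp Require Import all_boot all_order all_algebra.
From mathcomp Require Import all_classical all_reals all_analysis.
Set Implicit Arguments. Unset Strict Implicit. Unset Printing Implicit Defensive.
Import Order.TTheory GRing.Theory Num.Theory.
Local Open Scope classical_set_scope.
Local Open Scope ring_scope.
Local Open Scope ereal_scope.

(* The sigma-algebra B on E is the one of a measurableType E. *)

Definition maxitive {d} {E : measurableType d} {R : realType}
  (nu : set E -> \bar R) : Prop :=
  nu set0 = 0 /\
  (forall B, measurable B -> 0 <= nu B) /\
  (forall B B', measurable B -> measurable B' ->
     nu (B `|` B') = maxe (nu B) (nu B')).

Definition Bmeasurable {d} {E : measurableType d} {R : realType}
  (f : E -> \bar R) : Prop :=
  (forall x, 0 <= f x) /\
  (forall t : R, (0 <= t)%R -> measurable [set x | (t%:E < f x)%E]).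

Definition negligible {d} {E : measurableType d} {R : realType}
  (tau : set E -> \bar R) (N : set E) : Prop :=
  exists G, measurable G /\ tau G = 0 /\ N `<=` G.

(* tau-essential supremum of f on B (inf of the empty set is +oo) *)
Definition ess_sup_on {d} {E : measurableType d} {R : realType}
  (tau : set E -> \bar R) (f : E -> \bar R) (B : set E) : \bar R :=
  ereal_inf [set t%:E | t in [set t : R |
     (0 < t)%R /\ negligible tau (B `&` [set x | (t%:E < f x)%E])]].

(* supremum of f over B in [0,oo] (so the supremum over the empty set is 0) *)
Definition sup_on {d} {E : measurableType d} {R : realType}
  (f : E -> \bar R) (B : set E) : \bar R :=
  ereal_sup ([set 0] `|` (f @` B)).

Definition abs_cont {d} {E : measurableType d} {R : realType}
  (nu tau : set E -> \bar R) : Prop :=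
  forall B, measurable B -> tau B = 0 -> nu B = 0.

Definition has_rel_density {d} {E : measurableType d} {R : realType}
  (nu tau : set E -> \bar R) : Prop :=
  exists f : E -> \bar R, Bmeasurable f /\
    forall B, measurable B -> nu B = ess_sup_on tau f B.

(* Main.v *)
Require Import Defs.
From mathcomp Require Import all_boot all_order all_algebra.
From mathcomp Require Import all_classical all_reals all_analysis.
Import Order.TTheory GRing.Theory Num.Theory.
Local Open Scope classical_set_scope.
Local Open Scope ereal_scope.

Lemma dens_c (d : measure_display) (E : measurableType d)
  (R : realType) (nu : set E -> \bar R) (c : E -> \bar R) tau :
  maxitive tau ->
  (forall B, measurable B -> nu B = sup_on c B) ->
  abs_cont nu tau ->
  forall B, measurable B -> nu B = ess_sup_on tau c B.
Proof.
move=> [tau0 _] hnu hac B mB.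
apply/eqP; rewrite eq_le; apply/andP; split.
- rewrite hnu //; apply: le_ereal_inf_tmp => _ [t [t0 [G [mG [tG BG]]]] <-].
  apply: ge_ereal_sup => _ [->|[x Bx <-]]; first by rewrite lee_fin ltW.
  rewrite leNgt; apply/negP => ctx.
  have nG : nu G = 0 by apply: hac.
  have : c x <= sup_on c G.
    by apply: ereal_sup_ubound; right; exists x => //; apply: BG.
  by rewrite -hnu // nG => /(lt_le_trans ctx); rewrite lte_fin ltNge ltW.
- have s0 : 0 <= nu B by rewrite hnu //; apply: ereal_sup_ubound; left.
  move: s0; case E1: (nu B) => [r| |] // s0; last by rewrite leey.
  apply/lee_addgt0Pr => e e0.
  apply: ereal_inf_lbound; exists (r + e)%R => //; split.
    by move: s0; rewrite lee_fin => s0; apply: (le_lt_trans s0); rewrite ltrDl.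
  exists set0; split => //; split => // x [Bx ctx].
  have : c x <= nu B by rewrite hnu //; apply: ereal_sup_ubound; right; exists x.
  by rewrite E1 => /(lt_le_trans ctx); rewrite lte_fin ltNge lerDl ltW.
Qed.

Theorem proposition3p2 (d : measure_display) (E : measurableType d)
  (R : realType) (x0 : E) (nu : set E -> \bar R) (c : E -> \bar R) :
  maxitive nu ->
  Bmeasurable c ->
  (forall B, measurable B -> nu B = sup_on c B) ->
  (forall tau : set E -> \bar R, maxitive tau ->
     (abs_cont nu tau <-> has_rel_density nu tau))
  /\ has_rel_density nu nu.
Proof.
move=> mnu mc hnu.
have key : forall tau : set E -> \bar R, maxitive tau ->
     (abs_cont nu tau <-> has_rel_density nu tau).
  move=> tau mtau; split.
    by move=> hac; exists c; split => //; apply: dens_c.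
  move=> [f [_ hf]] B mB tB; rewrite hf //.
  apply/eqP; rewrite eq_le; apply/andP; split.
    apply/lee_addgt0Pr => e e0; rewrite add0e.
    apply: ereal_inf_lbound; exists e => //; split => //.
    by exists B; split => //; split => // x [].
  by apply: le_ereal_inf_tmp => _ [t [t0 _] <-]; rewrite lee_fin ltW.
split => //; apply/(key _ mnu) => B _ ->; done.
Qed.
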